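(* Let $R$ be a ring and let $A=\sigma(R)\langle x_1,\dots,x_n\rangle$ be a skew PBW extension of $R$ with associated families $\Sigma,\Delta$. Suppose $R$ is $(\Sigma,\Delta)$-compatible, Abelian, NI, and satisfies condition (SA1). If $R$ is a right (resp. left) p.p.-ring, then $A$ has Property $(a.c.)$ on the right (resp. left).
   Context: All rings are associative with identity. For $S\subseteq T$ (a ring $T$), $r_T(S)=\{a\in T: Sa=0\}$ and $\ell_T(S)=\{a\in T: aS=0\}$. A ring $A$ is a skew PBW extension of $R$, written $A=\sigma(R)\langle x_1,\dots,x_n\rangle$, if: (i) $R$ is a subring of $A$ with the same identity; (ii) there are elements $x_1,\dots,x_n\in A$ such that $A$ is a free left $R$-module with basis the standard monomials $x^\alpha=x_1^{\alpha_1}\cdots x_n^{\alpha_n}$, $\alpha\in\mathbb N^n$ (with $x^0=1$); (iii) for each $i$ and each nonzero $r\in R$ there is nonzero $c_{i,r}\in R$ with $x_ir-c_{i,r}x_i\in R$; (iv) for all $i,j$ there is nonzero $d_{i,j}\in R$ with $x_jx_i-d_{i,j}x_ix_j\in R+Rx_1+\cdots+Rx_n$. For such $A$ there are injective endomorphisms $\sigma_i$ of $R$ and $\sigma_i$-derivations $\delta_i$ of $R$ with $x_ir=\sigma_i(r)x_i+\delta_i(r)$ for all $r\in R$; $\Sigma=\{\sigma_1,\dots,\sigma_n\}$, $\Delta=\{\delta_1,\dots,\delta_n\}$. For $\alpha\in\mathbb N^n$, $\sigma^\alpha=\sigma_1^{\alpha_1}\circ\cdots\circ\sigma_n^{\alpha_n}$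 and $\delta^\alpha=\delta_1^{\alpha_1}\circ\cdots\circ\delta_n^{\alpha_n}$. $R$ is $\Sigma$-compatible if for all $a,b\in R$ and $\alpha\in\mathbb N^n$: $a\sigma^\alpha(b)=0$ iff $ab=0$; $R$ is $\Delta$-compatible if for all $a,b\in R$ and $\beta\in\mathbb N^n$: $ab=0$ implies $a\delta^\beta(b)=0$; $(\Sigma,\Delta)$-compatible means both. $R$ satisfies condition (SA1) if whenever $fg=0$ for $f=a_0+a_1X_1+\cdots+a_mX_m$ and $g=b_0+b_1Y_1+\cdots+b_tY_t$ in $A$ (with $a_i,b_j\in R$ and $X_i,Y_j$ standard monomials), then $a_ib_j=0$ for all $i,j$. $R$ is Abelian if every idempotent of $R$ is central. $R$ is NI if the upper nilradical $\mathrm{nil}^*(R)$ (sum of all nil ideals) equals the set $\mathrm{nil}(R)$ of nilpotent elements. $R$ is a right (resp. left) p.p.-ring if for each $a\in R$ there is an idempotent $e$ with $r_R(a)=eR$ (resp. $\ell_R(a)=Re$). A ring $T$ has Property $(a.c.)$ on the right if for every finitely generated right ideal $I$ of $T$ there is $c\in T$ with $r_T(I)=r_T(cT)$; on the left if for every finitely generated left ideal $I$ there is $c\in T$ with $\ell_T(I)=\ell_T(Tc)$. *)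

(* Defs.v *)
From HB Require Import structures.
From mathcomp Require Import all_boot all_order all_algebra.
Set Implicit Arguments. Unset Strict Implicit. Unset Printing Implicit Defensive.
Import GRing.Theory.
Local Open Scope ring_scope.

Section SkewPBW.
Variables (R A : pzRingType) (n : nat).
Variable phi : {rmorphism R -> A}.
Variable x : 'I_n -> A.

Definition std_mono (alpha : n.-tuple nat) : A :=
  \prod_(i < n) x i ^+ tnth alpha i.

Definition std_eval (s : seq (n.-tuple nat * R)) : A :=
  \sum_(p <- s) phi p.2 * std_mono p.1.

(* A = sigma(R)<x_1,...,x_n> is a skew PBW extension of R, where R is
   identified with its image under the injective unital ring map phi. *)
Definition is_skewPBW : Prop :=
  [/\ injective phi,
      (* free left R-module with basis the standard monomials *)
      (forall a : A, exists s, a = std_eval s),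
      (forall s, uniq (map fst s) -> std_eval s = 0 ->
         forall p, p \in s -> p.2 = 0),
      (forall (i : 'I_n) (r : R), r != 0 ->
         exists2 c : R, c != 0 & exists r' : R, x i * phi r - phi c * x i = phi r')
    & (forall i j : 'I_n, exists2 d : R, d != 0 &
         exists (r0 : R) (r : 'I_n -> R),
           x j * x i - phi d * x i * x j = phi r0 + \sum_(k < n) phi (r k) * x k)].

Definition SigmaDelta_of (sigma delta : 'I_n -> R -> R) : Prop :=
  forall (i : 'I_n) (r : R), x i * phi r = phi (sigma i r) * x i + phi (delta i r).

End SkewPBW.

Section RingNotions.
Variable R : pzRingType.

Definition fam_pow (n : nat) (f : 'I_n -> R -> R) (alpha : 'I_n -> nat) : R -> R :=
  foldr (fun i g => iter (alpha i) (f i) \o g) id (enum 'I_n).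

Definition Sigma_compatible n (sigma : 'I_n -> R -> R) : Prop :=
  forall (a b : R) (alpha : 'I_n -> nat),
    a * fam_pow sigma alpha b = 0 <-> a * b = 0.

Definition Delta_compatible n (delta : 'I_n -> R -> R) : Prop :=
  forall (a b : R) (beta : 'I_n -> nat),
    a * b = 0 -> a * fam_pow delta beta b = 0.

Definition idempotent_el (e : R) : Prop := e * e = e.

Definition Abelian_ring : Prop :=
  forall e : R, idempotent_el e -> forall r : R, e * r = r * e.

Definition nilpotent_el (a : R) : Prop := exists k : nat, a ^+ k = 0.

Definition two_sided_ideal (I : R -> Prop) : Prop :=
  [/\ I 0, (forall a b, I a -> I b -> I (a + b)), (forall a, I a -> I (- a)),
      (forall r a, I a -> I (r * a)) & (forall r a, I a -> I (a * r))].

Definition nil_ideal (I : R -> Prop) : Prop :=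
  two_sided_ideal I /\ forall a, I a -> nilpotent_el a.

Definition upper_nilradical (a : R) : Prop :=
  exists s : seq R, a = \sum_(y <- s) y /\
    forall y, y \in s -> exists I, nil_ideal I /\ I y.

Definition NI_ring : Prop :=
  forall a : R, upper_nilradical a <-> nilpotent_el a.

Definition right_pp : Prop :=
  forall a : R, exists e : R, idempotent_el e /\
    forall b : R, a * b = 0 <-> exists c, b = e * c.

Definition left_pp : Prop :=
  forall a : R, exists e : R, idempotent_el e /\
    forall b : R, b * a = 0 <-> exists c, b = c * e.

Definition right_ideal_gen (s : seq R) (y : R) : Prop :=
  exists t : seq R, size t = size s /\ y = \sum_(i < size s) s`_i * t`_i.
Definition left_ideal_gen (s : seq R) (y : R) : Prop :=
  exists t : seq R, size t = size s /\ y = \sum_(i < size s) t`_i * s`_i.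

Definition r_ann (S : R -> Prop) (a : R) : Prop := forall y, S y -> y * a = 0.
Definition l_ann (S : R -> Prop) (a : R) : Prop := forall y, S y -> a * y = 0.

Definition ac_right : Prop :=
  forall s : seq R, exists c : R,
    forall a, r_ann (right_ideal_gen s) a <-> r_ann (right_ideal_gen [:: c]) a.
Definition ac_left : Prop :=
  forall s : seq R, exists c : R,
    forall a, l_ann (left_ideal_gen s) a <-> l_ann (left_ideal_gen [:: c]) a.

End RingNotions.

Definition SA1 (R A : pzRingType) (n : nat) (phi : {rmorphism R -> A})
  (x : 'I_n -> A) : Prop :=
  forall s t : seq (n.-tuple nat * R), uniq (map fst s) -> uniq (map fst t) ->
    std_eval phi x s * std_eval phi x t = 0 ->
    forall p q, p \in s -> q \in t -> p.2 * q.2 = 0.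

(* Main.v *)
Require Import Defs.
From mathcomp Require Import all_boot all_order all_algebra.
Set Implicit Arguments. Unset Strict Implicit. Unset Printing Implicit Defensive.
Import GRing.Theory.
Local Open Scope ring_scope.

Lemma foldr_notin (R : pzRingType) n (f : 'I_n -> R -> R) (k : 'I_n) (l : seq 'I_n) :
  k \notin l ->
  foldr (fun i g => iter ((i == k) : nat) (f i) \o g) id l =1 id.
Proof.
elim: l => [|i l IH] //= ; rewrite in_cons negb_or => /andP[ki kl] r /=.
by rewrite eq_sym (negPf ki) /= IH.
Qed.

Lemma fam_pow_unit (R : pzRingType) n (f : 'I_n -> R -> R) (k : 'I_n) r :
  fam_pow f (fun i => (i == k) : nat) r = f k r.
Proof.
rewrite /fam_pow; have : k \in enum 'I_n by rewrite mem_enum.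
have : uniq (enum 'I_n) by apply: enum_uniq.
elim: (enum 'I_n) r => [|i l IH] r //= /andP[il ul]; rewrite in_cons.
case: eqP => [-> _|/eqP ki /= kl]; last first.
  by rewrite eq_sym in ki; rewrite (negPf ki) /= IH.
by rewrite eqxx /= foldr_notin.
Qed.


Lemma base_zero (R A : pzRingType) n (phi : {rmorphism R -> A}) (x : 'I_n -> A)
  sigma delta :
  SigmaDelta_of phi x sigma delta -> Sigma_compatible sigma -> Delta_compatible delta ->
  forall v, idempotent_el v -> forall k, phi (1 - v) * x k * phi v = 0.
Proof.
move=> SD Sc Dc v iv k.
have h0 : (1 - v) * v = 0 by rewrite mulrBl mul1r iv subrr.
have hs : (1 - v) * sigma k v = 0.
  by rewrite -(fam_pow_unit sigma k); apply/Sc.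
have hd : (1 - v) * delta k v = 0.
  by rewrite -(fam_pow_unit delta k); apply: Dc.
by rewrite -mulrA SD mulrDr mulrA -rmorphM hs rmorph0 mul0r -rmorphM hd rmorph0 addr0.
Qed.

Definition PP (R A : pzRingType) (phi : {rmorphism R -> A}) (M : A) :=
  forall v, idempotent_el v -> phi (1 - v) * M * phi v = 0.

Lemma PP1 (R A : pzRingType) (phi : {rmorphism R -> A}) : PP phi 1.
Proof.
move=> v iv; rewrite mulr1 -rmorphM mulrBl mul1r iv subrr rmorph0 //.
Qed.

Lemma split1 (R A : pzRingType) (phi : {rmorphism R -> A}) v : phi v + phi (1 - v) = 1.
Proof. by rewrite -rmorphD addrC subrK rmorph1. Qed.

Lemma PPM (R A : pzRingType) (phi : {rmorphism R -> A}) M N :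
  PP phi M -> PP phi N -> PP phi (M * N).
Proof.
move=> PM PN v iv.
have -> : phi (1 - v) * (M * N) * phi v =
  (phi (1 - v) * M * phi v) * (N * phi v) + phi (1 - v) * M * (phi (1 - v) * N * phi v).
  transitivity (phi (1 - v) * M * ((phi v + phi (1 - v)) * N * phi v)).
    by rewrite split1 mul1r !mulrA.
  by rewrite !mulrDl mulrDr !mulrA.
by rewrite PM // PN // mul0r mulr0 addr0.
Qed.

Lemma PP_mono (R A : pzRingType) n (phi : {rmorphism R -> A}) (x : 'I_n -> A)
  sigma delta :
  SigmaDelta_of phi x sigma delta -> Sigma_compatible sigma -> Delta_compatible delta ->
  forall al, PP phi (std_mono x al).
Proof.
move=> SD Sc Dc al; rewrite /std_mono.
apply: (big_ind (PP phi)); [exact: PP1| exact: PPM|] => i _.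
elim: (tnth al i) => [|m IH]; first by rewrite expr0; exact: PP1.
by rewrite exprS; apply: PPM => // v iv; apply: (base_zero SD).
Qed.

Lemma idem_compl (R : pzRingType) (v : R) : idempotent_el v -> idempotent_el (1 - v).
Proof. by rewrite /idempotent_el mulrBl mul1r mulrBr mulr1 => ->; rewrite subrr subr0. Qed.

Lemma central_A (R A : pzRingType) n (phi : {rmorphism R -> A}) (x : 'I_n -> A)
  sigma delta :
  is_skewPBW phi x ->
  SigmaDelta_of phi x sigma delta -> Sigma_compatible sigma -> Delta_compatible delta ->
  forall v, idempotent_el v -> (forall r, v * r = r * v) ->
  forall t, t * phi v = phi v * t.
Proof.
move=> [_ span _ _ _] SD Sc Dc v iv cv t.
have PM := PP_mono SD Sc Dc.
have Q1 : phi (1 - v) * t * phi v = 0.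
  have [s ->] := span t; rewrite /std_eval mulr_sumr mulr_suml big1 // => p _.
  have c1 : phi (1 - v) * phi p.2 = phi p.2 * phi (1 - v).
    by rewrite -!rmorphM mulrBl mulrBr mul1r mulr1 cv.
  by rewrite !mulrA c1 -!mulrA (mulrA (phi (1 - v))) (PM _ v iv) mulr0.
have Q2 : phi v * t * phi (1 - v) = 0.
  have [s ->] := span t; rewrite /std_eval mulr_sumr mulr_suml big1 // => p _.
  have cv' : v * p.2 = p.2 * v := cv _.
  rewrite !mulrA -rmorphM cv' rmorphM -!mulrA (mulrA (phi v)).
  have := PM p.1 (1 - v) (idem_compl iv); rewrite opprB addrC subrK => ->.
  by rewrite mulr0.
transitivity (phi v * t * phi v).
  by rewrite -{1}[t]mul1r -(split1 phi v) mulrDl mulrDl Q1 addr0.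
by rewrite -{2}[phi v * t]mulr1 -(split1 phi v) mulrDr Q2 addr0.
Qed.


Lemma std_eval_cons (R A : pzRingType) n (phi : {rmorphism R -> A}) (x : 'I_n -> A) p s :
  std_eval phi x (p :: s) = phi p.2 * std_mono x p.1 + std_eval phi x s.
Proof. by rewrite /std_eval big_cons. Qed.

Lemma add_rep (R A : pzRingType) n (phi : {rmorphism R -> A}) (x : 'I_n -> A) s p :
  uniq (map fst s) -> exists s', [/\ uniq (map fst s'),
     std_eval phi x s' = phi p.2 * std_mono x p.1 + std_eval phi x s &
     forall k, k \in map fst s' -> (k == p.1) || (k \in map fst s)].
Proof.
elim: s => [|q s IH] /=.
  move=> _; exists [:: p]; split => //; first by rewrite std_eval_cons.
move=> /andP[qs us].
case: (eqVneq q.1 p.1) => [e|ne].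
  exists ((q.1, p.2 + q.2) :: s); split => /=; first by rewrite qs.
    by rewrite !std_eval_cons /= rmorphD mulrDl e addrA.
  by move=> k; rewrite !inE => /orP[->|->]; rewrite ?orbT.
have [s' [us' ev H]] := IH us.
exists (q :: s'); split => /=.
- rewrite us' andbT; apply/negP => /H /orP[/eqP e|]; first by rewrite e eqxx in ne.
  by apply/negP.
- by rewrite !std_eval_cons ev addrCA.
- move=> k; rewrite !inE => /orP[->|/H /orP[->|->]]; by rewrite ?orbT.
Qed.

Lemma uniq_rep (R A : pzRingType) n (phi : {rmorphism R -> A}) (x : 'I_n -> A) :
  is_skewPBW phi x -> forall a, exists s, uniq (map fst s) /\ a = std_eval phi x s.
Proof.
move=> [_ span _ _ _] a; have [s0 ->] := span a.
elim: s0 => [|p s0 [s [us E]]]; first by exists [::].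
have [s' [us' ev _]] := add_rep phi x p us.
by exists s'; rewrite ev std_eval_cons E.
Qed.


Definition cidem (R : pzRingType) (E : R) := idempotent_el E /\ (forall r, E * r = r * E).

Lemma cidem_mul (R : pzRingType) (e E : R) : cidem e -> cidem E -> cidem (e * E).
Proof.
move=> [ie ce] [iE cE]; split.
  by rewrite /idempotent_el mulrA -(mulrA e E e) -ce mulrA ie -mulrA iE.
by move=> r; rewrite -mulrA cE mulrA ce mulrA.
Qed.

Lemma cidem1 (R : pzRingType) : cidem (1 : R).
Proof. by split; [rewrite /idempotent_el mulr1 | move=> r; rewrite mul1r mulr1]. Qed.

Lemma E_right (R : pzRingType) (T : eqType) : Abelian_ring R -> right_pp R ->
  forall s : seq (T * R), exists E, cidem E /\
    forall b, (forall p, p \in s -> p.2 * b = 0) <-> b = E * b.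
Proof.
move=> Ab pp; elim => [|p s [E [cE HE]]].
  by exists 1; split; [exact: cidem1 | move=> b; rewrite mul1r].
have [e [ie He]] := pp p.2.
have ce : cidem e by split => // r; apply: Ab.
exists (e * E); split; first exact: cidem_mul.
move=> b; split.
  move=> H; have h1 : b = e * b.
    have [c ->] := (He b).1 (H p (mem_head _ _)); by rewrite mulrA ie.
  have h2 : b = E * b by apply/HE => q qs; apply: H; rewrite inE qs orbT.
  by rewrite -mulrA -h2.
move=> hb q; rewrite inE => /orP[/eqP ->|qs].
  by apply/He; exists (E * b); rewrite mulrA.
move: q qs; apply/HE.
have k : E * (e * E) = e * E.
  by rewrite (proj2 ce E) mulrA (proj1 cE).
by rewrite {2}hb mulrA k -hb.
Qed.

Lemma E_left (R : pzRingType) (T : eqType) : Abelian_ring R -> left_pp R ->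
  forall s : seq (T * R), exists E, cidem E /\
    forall b, (forall p, p \in s -> b * p.2 = 0) <-> b = b * E.
Proof.
move=> Ab pp; elim => [|p s [E [cE HE]]].
  by exists 1; split; [exact: cidem1 | move=> b; rewrite mulr1].
have [e [ie He]] := pp p.2.
have ce : cidem e by split => // r; apply: Ab.
exists (e * E); split; first exact: cidem_mul.
move=> b; split.
  move=> H; have h1 : b = b * e.
    have [c ->] := (He b).1 (H p (mem_head _ _)); by rewrite -mulrA ie.
  have h2 : b = b * E by apply/HE => q qs; apply: H; rewrite inE qs orbT.
  by rewrite mulrA -h1.
move=> hb q; rewrite inE => /orP[/eqP ->|qs].
  by apply/He; exists (b * E); rewrite -mulrA -(proj2 ce E).
move: q qs; apply/HE.
have k : (e * E) * E = e * E by rewrite -mulrA (proj1 cE).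
by rewrite {2}hb -mulrA k -hb.
Qed.


Lemma f_right (R A : pzRingType) n (phi : {rmorphism R -> A}) (x : 'I_n -> A)
  sigma delta :
  is_skewPBW phi x -> SigmaDelta_of phi x sigma delta ->
  Sigma_compatible sigma -> Delta_compatible delta ->
  Abelian_ring R -> right_pp R -> SA1 phi x ->
  forall f : A, exists E, cidem E /\ forall a, (forall t, f * t * a = 0) <-> a = phi E * a.
Proof.
move=> P SD Sc Dc Ab pp SA f.
have [s [us ->]] := uniq_rep P f.
have [E [cE HE]] := E_right Ab pp s.
have cent := central_A P SD Sc Dc (proj1 cE) (proj2 cE).
exists E; split => // a; split.
  move=> H; have fa : std_eval phi x s * a = 0 by have := H 1; rewrite mulr1.
  have [u [uu ea]] := uniq_rep P a; rewrite ea in fa.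
  have hq : forall q, q \in u -> q.2 = E * q.2.
    by move=> q qu; apply/HE => p ps; exact: (SA s u us uu fa p q ps qu).
  rewrite ea /std_eval mulr_sumr; apply: eq_big_seq => q qu.
  by rewrite mulrA -rmorphM -hq.
move=> ha t; rewrite ha mulrA -(mulrA _ t) cent !mulrA.
have -> : std_eval phi x s * phi E = 0.
  rewrite /std_eval mulr_suml big1_seq // => p /andP[_ ps].
  have pE : p.2 * E = 0 by exact: (proj2 (HE E) (esym (proj1 cE)) p ps).
  by rewrite -mulrA cent mulrA -rmorphM pE rmorph0 mul0r.
by rewrite !mul0r.
Qed.

Lemma f_left (R A : pzRingType) n (phi : {rmorphism R -> A}) (x : 'I_n -> A)
  sigma delta :
  is_skewPBW phi x -> SigmaDelta_of phi x sigma delta ->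
  Sigma_compatible sigma -> Delta_compatible delta ->
  Abelian_ring R -> left_pp R -> SA1 phi x ->
  forall f : A, exists E, cidem E /\ forall a, (forall t, a * t * f = 0) <-> a = a * phi E.
Proof.
move=> P SD Sc Dc Ab pp SA f.
have [s [us ->]] := uniq_rep P f.
have [E [cE HE]] := E_left Ab pp s.
have cent := central_A P SD Sc Dc (proj1 cE) (proj2 cE).
exists E; split => // a; split.
  move=> H; have fa : a * std_eval phi x s = 0 by have := H 1; rewrite mulr1.
  have [u [uu ea]] := uniq_rep P a; rewrite ea in fa.
  have hq : forall q, q \in u -> q.2 = q.2 * E.
    by move=> q qu; apply/HE => p ps; exact: (SA u s uu us fa q p qu ps).
  rewrite ea /std_eval mulr_suml; apply: eq_big_seq => q qu.
  by rewrite -mulrA cent mulrA -rmorphM -hq.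
move=> ha t; rewrite ha -(mulrA a) -cent mulrA -(mulrA _ (phi E)).
have -> : phi E * std_eval phi x s = 0.
  rewrite /std_eval mulr_sumr big1_seq // => p /andP[_ ps].
  have pE : E * p.2 = 0 by exact: (proj2 (HE E) (esym (proj1 cE)) p ps).
  by rewrite mulrA -rmorphM pE rmorph0 mul0r.
by rewrite !mulr0.
Qed.


Lemma unit_gen (A : pzRingType) (s : seq A) f t (fs : f \in s) :
  exists tt : seq A, size tt = size s /\
    f * t = \sum_(j < size s) s`_j * tt`_j /\ t * f = \sum_(j < size s) tt`_j * s`_j.
Proof.
set i := index f s; have hi : (i < size s)%N by rewrite index_mem.
exists (mkseq (fun j => if j == i then t else 0) (size s)); split; first by rewrite size_mkseq.
have hz : forall j : 'I_(size s), j != Ordinal hi ->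
   (mkseq (fun j => if j == i then t else 0) (size s))`_j = 0.
  move=> j jne; rewrite nth_mkseq //.
  have -> : (nat_of_ord j == i) = false.
    apply/negbTE; move: jne; apply: contra => /eqP e; apply/eqP/val_inj => /=; exact: e.
  by [].
split.
  rewrite (bigD1 (Ordinal hi)) //= nth_mkseq // eqxx nth_index // big1 ?addr0 //.
  by move=> j jne; rewrite hz ?mulr0.
rewrite (bigD1 (Ordinal hi)) //= nth_mkseq // eqxx nth_index // big1 ?addr0 //.
by move=> j jne; rewrite hz ?mul0r.
Qed.

Lemma ann_right (A : pzRingType) (s : seq A) a :
  r_ann (right_ideal_gen s) a <-> forall f, f \in s -> forall t, f * t * a = 0.
Proof.
split.
  move=> H f fs t; have [tt [st [e _]]] := unit_gen t fs.
  by apply: H; exists tt; split.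
move=> H y [tt [_ ->]]; rewrite mulr_suml big1 // => j _.
by apply: H; apply: mem_nth.
Qed.

Lemma ann_left (A : pzRingType) (s : seq A) a :
  l_ann (left_ideal_gen s) a <-> forall f, f \in s -> forall t, a * t * f = 0.
Proof.
split.
  move=> H f fs t; have [tt [st [_ e]]] := unit_gen t fs.
  by rewrite -mulrA; apply: H; exists tt; split.
move=> H y [tt [_ ->]]; rewrite mulr_sumr big1 // => j _.
by rewrite mulrA; apply: H; apply: mem_nth.
Qed.

Lemma cidem_compl (R : pzRingType) (E : R) : cidem E -> cidem (1 - E).
Proof.
move=> [iE cE]; split; first exact: idem_compl.
by move=> r; rewrite mulrBl mulrBr mul1r mulr1 cE.
Qed.

Lemma mainR (R A : pzRingType) n (phi : {rmorphism R -> A}) (x : 'I_n -> A)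
  sigma delta :
  is_skewPBW phi x -> SigmaDelta_of phi x sigma delta ->
  Sigma_compatible sigma -> Delta_compatible delta ->
  Abelian_ring R -> right_pp R -> SA1 phi x -> ac_right A.
Proof.
move=> P SD Sc Dc Ab pp SA.
have L : forall s : seq A, exists E, cidem E /\
   forall a, (forall f, f \in s -> forall t, f * t * a = 0) <-> a = phi E * a.
  elim => [|f s [E [cE HE]]].
    by exists 1; split; [exact: cidem1 | move=> a; rewrite rmorph1 mul1r].
  have [e [ce He]] := f_right P SD Sc Dc Ab pp SA f.
  exists (e * E); split; first exact: cidem_mul.
  move=> a; split.
    move=> H; have h1 : a = phi e * a by apply/He; apply: H; exact: mem_head.
    have h2 : a = phi E * a by apply/HE => g gs; apply: H; rewrite inE gs orbT.
    by rewrite rmorphM -mulrA -h2.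
  move=> ha g; rewrite inE => /orP[/eqP ->|gs].
    by apply/He; rewrite {2}ha mulrA -rmorphM mulrA (proj1 ce) -ha.
  move: g gs; apply/HE.
  have k : E * (e * E) = e * E by rewrite (proj2 ce E) mulrA (proj1 cE).
  by rewrite {2}ha mulrA -rmorphM k -ha.
move=> s; have [E [cE HE]] := L s.
exists (phi (1 - E)) => a.
apply: (iff_trans (ann_right s a)); apply: (iff_trans (HE a)).
apply: (iff_trans _ (iff_sym (ann_right [:: phi (1 - E)] a))).
have cent := central_A P SD Sc Dc (proj1 (cidem_compl cE)) (proj2 (cidem_compl cE)).
split.
  move=> ha f; rewrite mem_seq1 => /eqP -> t.
  by rewrite -cent -mulrA rmorphB rmorph1 mulrBl mul1r -ha subrr mulr0.
move=> H; have := H _ (mem_head _ _) 1; rewrite mulr1 rmorphB rmorph1 mulrBl mul1r.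
by move/eqP; rewrite subr_eq0 => /eqP.
Qed.

Lemma mainL (R A : pzRingType) n (phi : {rmorphism R -> A}) (x : 'I_n -> A)
  sigma delta :
  is_skewPBW phi x -> SigmaDelta_of phi x sigma delta ->
  Sigma_compatible sigma -> Delta_compatible delta ->
  Abelian_ring R -> left_pp R -> SA1 phi x -> ac_left A.
Proof.
move=> P SD Sc Dc Ab pp SA.
have L : forall s : seq A, exists E, cidem E /\
   forall a, (forall f, f \in s -> forall t, a * t * f = 0) <-> a = a * phi E.
  elim => [|f s [E [cE HE]]].
    by exists 1; split; [exact: cidem1 | move=> a; rewrite rmorph1 mulr1].
  have [e [ce He]] := f_left P SD Sc Dc Ab pp SA f.
  exists (e * E); split; first exact: cidem_mul.
  move=> a; split.
    move=> H; have h1 : a = a * phi e by apply/He; apply: H; exact: mem_head.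
    have h2 : a = a * phi E by apply/HE => g gs; apply: H; rewrite inE gs orbT.
    by rewrite rmorphM mulrA -h1.
  move=> ha g; rewrite inE => /orP[/eqP ->|gs].
    have k1 : e * E * e = e * E by rewrite -mulrA -(proj2 ce E) mulrA (proj1 ce).
    by apply/He; rewrite {2}ha -mulrA -rmorphM k1 -ha.
  move: g gs; apply/HE.
  have k : (e * E) * E = e * E by rewrite -mulrA (proj1 cE).
  by rewrite {2}ha -mulrA -rmorphM k -ha.
move=> s; have [E [cE HE]] := L s.
exists (phi (1 - E)) => a.
apply: (iff_trans (ann_left s a)); apply: (iff_trans (HE a)).
apply: (iff_trans _ (iff_sym (ann_left [:: phi (1 - E)] a))).
have cent := central_A P SD Sc Dc (proj1 (cidem_compl cE)) (proj2 (cidem_compl cE)).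
split.
  move=> ha f; rewrite mem_seq1 => /eqP -> t.
  by rewrite -mulrA cent mulrA rmorphB rmorph1 mulrBr mulr1 -ha subrr mul0r.
move=> H; have := H _ (mem_head _ _) 1; rewrite mulr1 rmorphB rmorph1 mulrBr mulr1.
by move/eqP; rewrite subr_eq0 => /eqP.
Qed.


Theorem mainTheorem2 (R A : pzRingType) (n : nat) (phi : {rmorphism R -> A})
  (x : 'I_n -> A) (sigma delta : 'I_n -> R -> R) :
  is_skewPBW phi x ->
  SigmaDelta_of phi x sigma delta ->
  Sigma_compatible sigma -> Delta_compatible delta ->
  Abelian_ring R -> NI_ring R -> SA1 phi x ->
  (right_pp R -> ac_right A) /\ (left_pp R -> ac_left A).
Proof.
move=> P SD Sc Dc Ab _ SA; split => pp.
  exact: (mainR P SD Sc Dc Ab pp SA).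
exact: (mainL P SD Sc Dc Ab pp SA).
Qed.
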